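(* Let $\mathbb{F}$ be a field of characteristic $2$ with at least $4$ elements, let $k\geq 1$ be an integer, and let $B\in M_{4k+3}(\mathbb{F})$ be a non-derogative matrix with $\operatorname{Trace}(B)=c$. Then for every $a\in\mathbb{F}$ with $a\neq 0,1$, there exist $N,D\in M_{4k+3}(\mathbb{F})$ with $B=N+D$, $N^2=0$, and $D$ diagonalizable with every eigenvalue in $\{c,\ c+1,\ c+a,\ c+a+1\}$.
   Context: A square matrix is non-derogative if its minimal polynomial equals its characteristic polynomial. A matrix $D\in M_n(\mathbb{F})$ is diagonalizable if there exists an invertible $U\in M_n(\mathbb{F})$ such that $U^{-1}DU$ is diagonal. *)

(* Defs.v *)
From HB Require Import structures.
From mathcomp Require Import all_boot all_order all_algebra.
Set Implicit Arguments. Unset Strict Implicit. Unset Printing Implicit Defensive.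
Import GRing.Theory.
Local Open Scope ring_scope.

Definition non_derogative (F : fieldType) (n : nat) (A : 'M[F]_n.+1) : Prop :=
  mxminpoly A = char_poly A.

(* Main.v *)
Require Import Defs.
From HB Require Import structures.
From mathcomp Require Import all_boot all_order all_algebra.
From Stdlib Require Import Classical.
Set Implicit Arguments. Unset Strict Implicit. Unset Printing Implicit Defensive.
Import GRing.Theory.
Local Open Scope ring_scope.

Section PolyLcm.
Variable F : fieldType.
Implicit Types f g : {poly F}.

Lemma poly_lcm_split f g : f != 0 -> g != 0 ->
  exists X Y, [/\ X %| f, Y %| g, coprimep X Y, f %| X * Y & g %| X * Y].
Proof.
move=> f0 g0.
set d := gcdp f g.
have d0 : d != 0 by rewrite gcdp_eq0 negb_and f0.
have dg : d %| g by exact: dvdp_gcdr.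
have df : d %| f by exact: dvdp_gcdl.
set g' := g %/ d.
have g'0 : g' != 0 by rewrite dvdp_div_eq0.
set f' := f %/ d.
have cfg : coprimep f' g' by apply: coprimep_div_gcd; rewrite f0.
set X := gdcop g' f.
set r := gdcop g' g.
have Xf : X %| f by exact: dvdp_gdco.
have rg : r %| g by exact: dvdp_gdco.
have X0 : X != 0 by apply/eqP => X0; move: Xf; rewrite X0 dvd0p (negPf f0).
have r0 : r != 0 by apply/eqP => r0; move: rg; rewrite r0 dvd0p (negPf g0).
have cX : coprimep X g' by rewrite /X; case: gdcopP => ? _; rewrite (negPf f0) orbF.
have cr : coprimep r g' by rewrite /r; case: gdcopP => ? _; rewrite (negPf g0) orbF.
have Xmax : forall e, e %| f -> coprimep e g' -> e %| X by rewrite /X; case: gdcopP.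
set Y := g %/ r.
have gYr : g = Y * r by rewrite divpK.
have Y0 : Y != 0 by apply/eqP => Y0; move: g0; rewrite gYr Y0 mul0r eqxx.
have Yg : Y %| g by rewrite gYr dvdp_mulr.
set N := size g.
have YN : Y %| g' ^+ N.
  have := dvdp_gdcor g g'0; rewrite -/r -/N gYr mulrC.
  by rewrite dvdp_mul2l.
have cXY : coprimep X Y.
  by apply: (coprimep_dvdl YN); apply: coprimep_expr.
have gd : g = g' * d by rewrite divpK.
have fd : f = f' * d by rewrite divpK.
have rd : r %| d by rewrite -(Gauss_dvdpl _ cr) mulrC -gd.
have rX : r %| X by apply: Xmax => //; exact: dvdp_trans rd df.
set s := f %/ X.
have fsX : f = s * X by rewrite divpK.
set M := size f.
have sN : s %| g' ^+ M.
  have := dvdp_gdcor f g'0; rewrite -/X -/M {1}fsX mulrC.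
  by rewrite dvdp_mul2l.
have csf : coprimep s f'.
  apply: (coprimep_dvdr sN); apply: coprimep_expl; by rewrite coprimep_sym.
have sd : s %| d by rewrite -(Gauss_dvdpl _ csf) mulrC -fd fsX dvdp_mulr.
have sg : s %| g by exact: dvdp_trans sd dg.
have csr : coprimep s r.
  rewrite coprimep_sym; apply: (coprimep_dvdl sN); exact: coprimep_expr.
have sY : s %| Y by rewrite -(Gauss_dvdpl _ csr) -gYr.
exists X, Y; split => //.
  by rewrite fsX mulrC dvdp_mul.
by rewrite gYr mulrC dvdp_mul.
Qed.

End PolyLcm.

Section Cyclic.
Variables (F : fieldType) (n : nat) (A : 'M[F]_n.+1).
Implicit Types (f g h : {poly F}) (v w : 'rV[F]_n.+1).

Definition ann v h := v *m horner_mx A h == 0.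
Definition gen v f := f != 0 /\ forall h, ann v h = (f %| h).

Lemma hornerM f g : horner_mx A (f * g) = horner_mx A f *m horner_mx A g.
Proof. by rewrite rmorphM mulmxE. Qed.

Lemma ann_mull v f g : ann v f -> ann v (g * f).
Proof. by rewrite /ann mulrC hornerM mulmxA => /eqP->; rewrite mul0mx. Qed.

Lemma ann_mulr v f g : ann v f -> ann v (f * g).
Proof. by rewrite mulrC; apply: ann_mull. Qed.

Lemma ann_dvd v f g : ann v f -> f %| g -> ann v g.
Proof. by move=> af /dvdpP[q ->]; apply: ann_mull. Qed.

Lemma annD v f g : ann v f -> ann v g -> ann v (f + g).
Proof. by rewrite /ann rmorphD mulmxDr => /eqP-> /eqP->; rewrite addr0. Qed.

Lemma annN v f : ann v f -> ann v (- f).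
Proof. by rewrite /ann rmorphN mulmxN => /eqP->; rewrite oppr0. Qed.

Lemma ann_addv v w h : ann v h -> ann w h -> ann (v + w) h.
Proof. by rewrite /ann mulmxDl => /eqP-> /eqP->; rewrite addr0. Qed.

Lemma ann_mulv v s h : ann (v *m horner_mx A s) h = ann v (s * h).
Proof. by rewrite /ann hornerM mulmxA. Qed.

Lemma ann_minpoly v : ann v (mxminpoly A).
Proof. by rewrite /ann mx_root_minpoly mulmx0. Qed.

Lemma exist_gen v : exists f, gen v f.
Proof.
suff H : forall k f, (size f <= k)%N -> f != 0 -> ann v f -> exists g, gen v g.
  apply: (H _ (mxminpoly A) (leqnn _)); last exact: ann_minpoly.
  by rewrite -size_poly_eq0 size_mxminpoly.
elim=> [|k IH] f.
  by rewrite leqn0 size_poly_eq0 => /eqP-> ; rewrite eqxx.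
move=> sf f0 af.
case: (classic (exists r : {poly F}, [/\ r != 0, (size r < size f)%N & ann v r])).
  move=> [r [r0 sr ar]]; apply: (IH r) => //.
  by rewrite -ltnS (leq_trans sr).
move=> nex; exists f; split=> // h; apply/idP/idP; last by apply: ann_dvd.
move=> ah; apply/modp_eq0P; apply/eqP; apply/negPn/negP => m0.
apply: nex; exists (h %% f); split=> //; first by rewrite ltn_modp.
have -> : h %% f = h - (h %/ f) * f by rewrite {2}(divp_eq h f) addrC addKr.
by apply: annD => //; apply: annN; apply: ann_mull.
Qed.

Lemma gen_div v f s t : gen v f -> f = s * t -> gen (v *m horner_mx A s) t.
Proof.
move=> [f0 gf] fst.
have s0 : s != 0 by apply/eqP => s0; move: f0; rewrite fst s0 mul0r eqxx.
have t0 : t != 0 by apply/eqP => t0; move: f0; rewrite fst t0 mulr0 eqxx.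
split=> // h; rewrite ann_mulv gf fst.
by rewrite dvdp_mul2l.
Qed.

Lemma gen_add v w f g : gen v f -> gen w g -> coprimep f g -> gen (v + w) (f * g).
Proof.
move=> [f0 gf] [g0 gg] cfg; split; first by rewrite mulf_neq0.
move=> h; apply/idP/idP; last first.
  move=> fgh; apply: ann_addv.
    by rewrite gf (dvdp_trans _ fgh) // dvdp_mulIl.
  by rewrite gg (dvdp_trans _ fgh) // dvdp_mulIr.
move=> ah; rewrite Gauss_dvdp //; apply/andP; split.
  rewrite -(Gauss_dvdpl _ cfg) -gf.
  have : ann (v + w) (h * g) by apply: ann_mulr.
  have : ann w (h * g) by rewrite gg dvdp_mulIr.
  rewrite /ann mulmxDl => /eqP->; by rewrite addr0.
rewrite coprimep_sym in cfg.
rewrite -(Gauss_dvdpl _ cfg) -gg.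
have : ann (v + w) (h * f) by apply: ann_mulr.
have : ann v (h * f) by rewrite gf dvdp_mulIr.
rewrite /ann mulmxDl => /eqP->; by rewrite add0r.
Qed.

Lemma lcm_vec v w : exists u, forall h, ann u h -> ann v h /\ ann w h.
Proof.
have [f [f0 gf]] := exist_gen v.
have [g [g0 gg]] := exist_gen w.
have [X [Y [Xf Yg cXY fXY gXY]]] := poly_lcm_split f0 g0.
have g1 : gen (v *m horner_mx A (f %/ X)) X by apply: (gen_div (conj f0 gf)); rewrite divpK.
have g2 : gen (w *m horner_mx A (g %/ Y)) Y by apply: (gen_div (conj g0 gg)); rewrite divpK.
have [_ g3] := gen_add g1 g2 cXY.
exists (v *m horner_mx A (f %/ X) + w *m horner_mx A (g %/ Y)) => h.
rewrite g3 => XYh; split.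
  by rewrite gf (dvdp_trans fXY).
by rewrite gg (dvdp_trans gXY).
Qed.

Lemma lcm_seq (s : seq 'rV[F]_n.+1) :
  exists u, forall h, ann u h -> forall x, x \in s -> ann x h.
Proof.
elim: s => [|x s [u Hu]]; first by exists 0 => h _ x.
have [u' Hu'] := lcm_vec x u.
exists u' => h /Hu' [ax au] y; rewrite inE => /orP[/eqP->//|ys].
exact: Hu.
Qed.

Lemma cyclic_vec : exists v, forall h, ann v h -> h = 0 \/ (size (mxminpoly A) <= size h)%N.
Proof.
have [u Hu] := lcm_seq [seq delta_mx 0 i | i <- enum 'I_n.+1].
exists u => h /Hu ah.
have H0 : horner_mx A h = 0.
  apply/row_matrixP => i; rewrite row0 rowE.
  apply/eqP; apply: ah; apply/mapP; exists i => //; by rewrite mem_enum.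
have := mxminpoly_min H0.
have [->|h0] := eqVneq h 0; first by left.
by move=> /(dvdp_leq h0); right.
Qed.

End Cyclic.
Section Construct.
Variables (F : fieldType) (n' : nat) (A : 'M[F]_n'.+1) (v : 'rV[F]_n'.+1) (a : F).
Hypothesis cyc : forall h, v *m horner_mx A h = 0 -> (size h <= n'.+1)%N -> h = 0.

Definition lam (i : nat) : F := if odd i then 1 else a.

Fixpoint Pr (i : nat) : {poly F} := if i is j.+1 then Pr j * ('X - (lam j)%:P) else 1.

Lemma Pr_monic i : Pr i \is monic.
Proof. elim: i => [|i IH] /=; first exact: monic1. by rewrite monicMl // monicXsubC. Qed.

Lemma size_Pr i : size (Pr i) = i.+1.
Proof.
elim: i => [|i IH] /=; first by rewrite size_poly1.
by rewrite size_Mmonic ?monicXsubC // ?IH ?size_XsubC ?addn2 // -size_poly_eq0 IH.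
Qed.

Lemma tri j (cf : nat -> F) : \sum_(i < j) cf i *: Pr i = 0 -> forall i, (i < j)%N -> cf i = 0.
Proof.
elim: j => [|j IH] /=; first by move=> _ i.
rewrite big_ord_recr /= => H.
have cj : cf j = 0.
  have := congr1 (fun p : {poly F} => p`_j) H.
  rewrite coef0 coefD coef_sum coefZ big1 ?add0r; last first.
    move=> i _; rewrite coefZ nth_default ?mulr0 // size_Pr; exact: ltn_ord.
  have : (Pr j)`_j = 1 by have /monicP := Pr_monic j; rewrite /lead_coef size_Pr.
  by move=> ->; rewrite mulr1.
move: H; rewrite cj scale0r addr0 => H i; rewrite ltnS leq_eqVlt => /orP[/eqP->//|].
exact: IH.
Qed.

Definition b (i : nat) := v *m horner_mx A (Pr i).

Lemma b_succ i : b i.+1 = b i *m (A - (lam i)%:M).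
Proof. by rewrite /b /= rmorphM /= -mulmxE mulmxA rmorphB /= horner_mx_X horner_mx_C. Qed.

Lemma bA i : b i *m A = b i.+1 + lam i *: b i.
Proof. by rewrite b_succ mulmxBr mul_mx_scalar subrK. Qed.

Definition Pm : 'M[F]_n'.+1 := \matrix_(i < n'.+1) b i.

Lemma Pm_indep (x : 'rV[F]_n'.+1) : x *m Pm = 0 -> x = 0.
Proof.
move=> H.
have E : x *m Pm = v *m horner_mx A (\sum_(i < n'.+1) x 0 i *: Pr i).
  rewrite mulmx_sum_row raddf_sum mulmx_sumr; apply: eq_bigr => i _.
  rewrite rowK scalemxAr; congr (_ *m _); symmetry; exact: horner_mxZ.
have P0 : \sum_(i < n'.+1) x 0 i *: Pr i = 0.
  apply: cyc; first by rewrite -E.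
  apply: (leq_trans (size_sum _ _ _)); apply/bigmax_leqP => i _.
  by apply: (leq_trans (size_scale_leq _ _)); rewrite size_Pr.
have P1 : \sum_(i < n'.+1) (fun j => x 0 (inord j)) i *: Pr i = 0.
  by rewrite -[RHS]P0; apply: eq_bigr => i _ /=; rewrite inord_val.
apply/rowP => i; rewrite mxE.
by have := @tri _ (fun j => x 0 (inord j)) P1 _ (ltn_ord i); rewrite /= inord_val.
Qed.

Lemma Pm_unit : Pm \in unitmx.
Proof.
rewrite -row_free_unit -kermx_eq0; apply/eqP/row_matrixP => i; rewrite row0.
apply: Pm_indep; apply/sub_kermxP; exact: row_sub.
Qed.

Definition e (i : nat) : 'rV[F]_n'.+1 := delta_mx 0 (inord i).

Lemma binv i : (i <= n')%N -> b i *m invmx Pm = e i.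
Proof.
move=> hi; have -> : b i = row (inord i) Pm by rewrite rowK inordK.
by rewrite rowE mulmxK // Pm_unit.
Qed.

Definition N0 : 'M[F]_n'.+1 := \matrix_(i, j) ((odd i) && (j == i.+1 :> nat))%:R.

Lemma N0N0 : N0 *m N0 = 0.
Proof.
apply/matrixP => i l; rewrite !mxE big1 // => j _; rewrite !mxE.
case: (boolP (odd i && (j == i.+1 :> nat))) => [/andP[oi /eqP ji]|H]; last by rewrite mul0r.
by rewrite ji /= oi /= mulr0.
Qed.

Lemma trN0 : \tr N0 = 0.
Proof.
rewrite /mxtrace; apply: big1 => i _; rewrite mxE.
by rewrite (eqn_leq i) ltnn andbF andbF.
Qed.

Hypothesis n'even : ~~ odd n'.

Lemma rowN0 i : (i < n')%N -> row (inord i) N0 = if odd i then e i.+1 else 0.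
Proof.
move=> hi; apply/rowP => j; rewrite !mxE inordK; last exact: ltnW.
case: ifP => oi /=; last by rewrite mxE.
by rewrite /e mxE eqxx /= -(inj_eq val_inj) /= inordK.
Qed.

Definition S := Pm *m A *m invmx Pm - N0.

Lemma rowS i : (i < n')%N -> row (inord i) S = if odd i then e i else e i.+1 + a *: e i.
Proof.
move=> hi.
have hi' : (i < n'.+1)%N by exact: ltnW.
rewrite /S linearB /= !row_mul rowK inordK // bA mulmxDl -scalemxAl.
rewrite binv // binv // rowN0 // /lam.
by case: (odd i) => /=; [rewrite scale1r addrAC subrr add0r | rewrite subr0].
Qed.

Variable m : nat.
Hypothesis n'def : n' = m.*2.
Hypothesis modd : odd m.
Hypothesis two0 : (2%:R : F) = 0.
Hypothesis trA : \tr A = 0.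

Lemma c2opp (x : F) : - x = x.
Proof.
apply/eqP; rewrite eq_sym -subr_eq0 opprK -mulr2n -mulr_natr two0 mulr0 //.
Qed.

Lemma diagS i : (i < n')%N -> S (inord i) (inord i) = lam i.
Proof.
move=> hi; have := congr1 (fun r : 'rV[F]_n'.+1 => r 0 (inord i)) (rowS hi).
rewrite mxE => ->; rewrite /lam; case: (odd i) => /=.
  by rewrite /e mxE !eqxx.
rewrite !mxE !eqxx /= -(inj_eq val_inj) /= !inordK ?(ltnW hi) //.
  by rewrite (eqn_leq i) ltnn andbF mulr1 add0r.
exact: ltnW.
Qed.

Lemma sum_lam j : \sum_(i < j.*2) lam i = (a + 1) *+ j.
Proof.
elim: j => [|j IH]; first by rewrite big_ord0 mulr0n.
rewrite doubleS !big_ord_recr /= IH /lam /= odd_double /= mulrS.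
by rewrite -addrA addrC.
Qed.

Lemma Slast : S ord_max ord_max = a + 1.
Proof.
have trS : \tr S = 0.
  rewrite /S linearB /= mxtrace_mulC mulKmx ?Pm_unit // trA trN0 subr0 //.
have : \tr S = \sum_(i < n') lam i + S ord_max ord_max.
  rewrite /mxtrace big_ord_recr /=; congr (_ + _); apply: eq_bigr => i _.
  have -> : widen_ord (leqnSn n') i = inord i.
    by apply: val_inj; rewrite /= inordK //; exact: ltnW (ltn_ord i).
  exact: diagS.
have -> : \sum_(i < n') lam i = a + 1.
  rewrite n'def sum_lam -(odd_double_half m) modd add1n mulrS -muln2 mulrnA.
  by rewrite -mulr_natr two0 mulr0 addr0.
move=> E; move: trS; rewrite E.
by move/eqP; rewrite addrC addr_eq0 c2opp => /eqP.
Qed.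

Lemma eS i x : e i *m (S - x%:M) = row (inord i) S - x *: e i.
Proof. by rewrite mulmxBr mul_mx_scalar /e -rowE. Qed.

Lemma hX x : horner_mx S ('X - x%:P) = S - x%:M.
Proof. by rewrite rmorphB /= horner_mx_X horner_mx_C. Qed.

Lemma hM p1 p2 : horner_mx S (p1 * p2) = horner_mx S p1 *m horner_mx S p2.
Proof. by rewrite rmorphM mulmxE. Qed.

Definition Q1 := horner_mx S (('X - 1%:P) * ('X - a%:P)).

Lemma eQ1 i : (i < n')%N -> e i *m Q1 = 0.
Proof.
move=> hi; case oi : (odd i).
  by rewrite /Q1 hM !hX mulmxA eS rowS // oi scale1r subrr mul0mx.
rewrite /Q1 mulrC hM !hX mulmxA eS rowS // oi addrK.
have hi1 : (i.+1 < n')%N.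
  rewrite ltn_neqAle hi andbT; apply/negP => /eqP E.
  by move: n'even; rewrite -E /= oi.
by rewrite eS rowS // /= oi scale1r subrr.
Qed.

Definition q : {poly F} := ('X - (a + 1)%:P) * (('X - 1%:P) * ('X - a%:P)).

Lemma hornerSq : horner_mx S q = 0.
Proof.
apply/row_matrixP => i; rewrite row0 rowE.
have [hi|hi] := ltnP i n'.
  rewrite /q mulrC hM -/Q1 mulmxA.
  have -> : delta_mx 0 i = e i by rewrite /e inord_val.
  by rewrite eQ1 // mul0mx.
have iE : i = ord_max by apply: val_inj => /=; apply/eqP; rewrite eqn_leq hi -ltnS ltn_ord.
rewrite iE /q hM hX -/Q1 mulmxA.
have eE : delta_mx 0 (@ord_max n') = e n' by rewrite /e; congr delta_mx; apply: val_inj; rewrite /= inordK.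
rewrite eE eS.
rewrite mulmx_sum_row; apply: big1 => j _.
have [hj|hj] := ltnP j n'.
  have -> : row j Q1 = e j *m Q1 by rewrite /e inord_val rowE.
  by rewrite eQ1 // scaler0.
have jE : j = ord_max by apply: val_inj => /=; apply/eqP; rewrite eqn_leq hj -ltnS ltn_ord.
have iM : (inord n' : 'I_n'.+1) = ord_max by apply: val_inj; rewrite /= inordK.
rewrite jE iM.
have -> : (row ord_max S - (a + 1) *: e n') 0 ord_max = S ord_max ord_max - (a + 1).
  by rewrite /e iM [LHS]mxE [row _ _ _ _]mxE; congr (_ + _); rewrite !mxE !eqxx mulr1.
rewrite Slast subrr; apply/rowP => k; rewrite !mxE mul0r.
done.
Qed.

End Construct.


Lemma horner_shift (F : fieldType) n (B : 'M[F]_n.+1) c p :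
  horner_mx (B - c%:M) p = horner_mx B (p \Po ('X - c%:P)).
Proof.
elim/poly_ind: p => [|p d IH]; first by rewrite comp_poly0 !rmorph0.
rewrite comp_polyD comp_polyM comp_polyX comp_polyC !rmorphD !rmorphM /= IH.
by rewrite !horner_mx_X !horner_mx_C rmorphB /= horner_mx_X horner_mx_C.
Qed.


Theorem proposition2p13 (F : fieldType) (k : nat)
  (char2 : (2%N \in [pchar F]))
  (card4 : exists s : seq F, uniq s /\ size s = 4%N)
  (hk : (1 <= k)%N)
  (B : 'M[F]_((4 * k + 2).+1)) (c : F)
  (hB : non_derogative B) (htr : \tr B = c) :
  forall a : F, a != 0 -> a != 1 ->
  exists N D : 'M[F]_((4 * k + 2).+1),
    [/\ B = N + D, N *m N = 0, diagonalizable D &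
        forall x : F, eigenvalue D x -> x \in [:: c; c + 1; c + a; c + a + 1]].
Proof.
move=> a a0 a1.
have two0 : (2%:R : F) = 0 := pcharf0 char2.
have [v Hv] := cyclic_vec B.
have szB : size (mxminpoly B) = (4 * k + 2).+2 by rewrite hB size_char_poly.
set A := B - c%:M.
have cyc : forall h, v *m horner_mx A h = 0 -> (size h <= (4 * k + 2).+1)%N -> h = 0.
  move=> h H sh; rewrite /A horner_shift in H.
  have szc : size (h \Po ('X - c%:P)) = size h by rewrite size_comp_poly2 // size_XsubC.
  case: (Hv _ (introT eqP H)) => [h0|].
    by apply/eqP; rewrite -size_poly_eq0 -szc h0 size_poly0.
  by rewrite szB szc => H2; have := leq_trans H2 sh; rewrite ltnn.
set m := (k.*2).+1.
have n'def : (4 * k + 2)%N = m.*2 by rewrite /m -!mul2n mulnS mulnA addnC.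
have modd : odd m by rewrite /m /= odd_double.
have n'even : ~~ odd (4 * k + 2) by rewrite n'def odd_double.
have trA : \tr A = 0.
  rewrite /A linearB /= mxtrace_scalar htr mulrS n'def -mul2n mulrnA.
  by rewrite -(mulr_natr c 2) two0 mulr0 mul0rn addr0 subrr.
set P := Pm A v a.
have Pu : P \in unitmx := Pm_unit a cyc.
set N0' := N0 F (4 * k + 2).
set S' := S A v a.
have Hq : horner_mx (invmx P *m (S' + c%:M) *m P)
    (\prod_(x <- [:: c + 1; c + a; c + a + 1]) ('X - x%:P)) = 0.
  rewrite -{2}(invmxK P) horner_mx_uconj ?unitmx_inv //.
  have hf t : horner_mx (S' + c%:M) ('X - (c + t)%:P) = S' - t%:M.
    by rewrite rmorphB /= horner_mx_X horner_mx_C raddfD /= opprD addrA addrK.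
  rewrite !big_cons big_nil mulr1 !rmorphM /= -[c + a + 1]addrA !hf.
  have H := hornerSq a cyc n'even n'def modd two0 trA.
  rewrite -!hX -!rmorphM /=.
  have -> : ('X - 1%:P) * (('X - a%:P) * ('X - (a + 1)%:P)) = q a by rewrite /q mulrA mulrC.
  by rewrite H mulmx0 mul0mx.
exists (invmx P *m N0' *m P), (invmx P *m (S' + c%:M) *m P); split.
- rewrite -mulmxDl -mulmxDr /S' /S -/P -/N0' addrCA addrA subrK.
  rewrite mulmxDr mulmxDl !mulmxA mulmxKV // mulVmx // mul1mx.
  rewrite mul_mx_scalar -scalemxAl mulVmx // scalemx1.
  by rewrite /A subrK.
- rewrite !mulmxA mulmxK // -(mulmxA (invmx P)).
  by rewrite [N0' *m N0']N0N0 mulmx0 mul0mx.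
- apply/diagonalizableP; exists [:: c + 1; c + a; c + a + 1]; last exact: mxminpoly_min.
  rewrite /= !inE !negb_or -!addrA !(inj_eq (addrI c)) (eq_sym 1 a) a1 /=.
  apply/and3P; split => //.
    by rewrite -{1}[1]add0r (inj_eq (addIr 1)) eq_sym a0.
  by rewrite -{1}[a]addr0 (inj_eq (addrI a)) eq_sym oner_eq0.
- move=> x; rewrite eigenvalue_root_min => rx.
  have := root_dvdp (mxminpoly_min Hq) rx; rewrite root_prod_XsubC !inE.
  by move=> /or3P[] /eqP ->; rewrite ?eqxx ?orbT.
Qed.
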